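(* Let $n\ge4$, $0<\alpha_2,\alpha_3<1$, $\alpha_1=1-\alpha_2-\alpha_3$, $\lambda^*=\big(\frac{n-1+\alpha_1}{n},\frac{\alpha_2}{n},\frac{\alpha_3}{n}\big)$. Then $$\sum_{\substack{i\in I\\ i_2\ge1,\ i_3\ge1}}|l_i(\lambda^* )|\le\frac{5\cdot2^{n+1}}{e\,n(\ln n-1)}\Big(1+\frac{15}{n-3}\Big).$$
   Context: For an integer $n\ge1$ let $I=\{i=(i_1,i_2,i_3)\in\mathbb{Z}_+^3: i_1+i_2+i_3=n\}$ and $l_i(\lambda)=\prod_{s=1}^{3}\frac{1}{i_s!}\prod_{t=0}^{i_s-1}(n\lambda_s-t)$ for $\lambda=(\lambda_1,\lambda_2,\lambda_3)$ (Lagrange fundamental polynomials for the equally spaced nodes $i/n$ of a triangle in barycentric coordinates). *)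

(* Defs.v *)
From Stdlib Require Import Reals List Arith Bool.
Import ListNotations.
Open Scope R_scope.

Fixpoint fallprod (x : R) (k : nat) : R :=
  match k with
  | O => 1
  | S k' => fallprod x k' * (x - INR k')
  end.

Definition lfactor (n : nat) (lam : R) (k : nat) : R :=
  / INR (fact k) * fallprod (INR n * lam) k.

Definition idx := (nat * nat * nat)%type.
Definition i1 (i : idx) : nat := fst (fst i).
Definition i2 (i : idx) : nat := snd (fst i).
Definition i3 (i : idx) : nat := snd i.

Definition lagr (n : nat) (i : idx) (l1 l2 l3 : R) : R :=
  lfactor n l1 (i1 i) * lfactor n l2 (i2 i) * lfactor n l3 (i3 i).

(* I = { i in Z_+^3 : i1 + i2 + i3 = n }, as an explicit duplicate-free list *)
Definition Iset (n : nat) : list idx :=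
  flat_map (fun a =>
    flat_map (fun b => if (a + b <=? n)%nat then [((a, b), (n - a - b)%nat)] else [])
      (seq 0 (S n)))
    (seq 0 (S n)).

Definition sumR (l : list R) : R := fold_right Rplus 0 l.

(* Main.v *)
Require Import Defs.
From Stdlib Require Import Reals List Arith Bool.
From Stdlib Require Import Lra Lia Psatz.
Import ListNotations.
Open Scope R_scope.

Lemma sumR_app l1 l2 : sumR (l1 ++ l2) = sumR l1 + sumR l2.
Proof. induction l1; simpl; [lra|rewrite IHl1; lra]. Qed.

Lemma sumR_le {A} (f g : A -> R) l :
  (forall x, In x l -> f x <= g x) -> sumR (map f l) <= sumR (map g l).
Proof.
  induction l; simpl; intros H; [lra|].
  apply Rplus_le_compat; auto.
Qed.

Lemma sumR_ext {A} (f g : A -> R) l :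
  (forall x, In x l -> f x = g x) -> sumR (map f l) = sumR (map g l).
Proof. intros H; now rewrite (map_ext_in f g l H). Qed.

Lemma sumR_plus {A} (f g : A -> R) l :
  sumR (map (fun x => f x + g x) l) = sumR (map f l) + sumR (map g l).
Proof. induction l; simpl; [lra|rewrite IHl; lra]. Qed.

Lemma sumR_scal {A} (c : R) (f : A -> R) l :
  sumR (map (fun x => c * f x) l) = c * sumR (map f l).
Proof. induction l; simpl; [lra|rewrite IHl; lra]. Qed.

Lemma sumR_flat_map {A B} (F : B -> R) (H : A -> list B) l :
  sumR (map F (flat_map H l)) = sumR (map (fun x => sumR (map F (H x))) l).
Proof.
  induction l; simpl; [lra|]. rewrite map_app, sumR_app, IHl; lra.
Qed.

Lemma sumR_filter {A} (F : A -> R) p l :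
  sumR (map F (filter p l)) = sumR (map (fun x => if p x then F x else 0) l).
Proof.
  induction l; simpl; [lra|]. destruct (p a); simpl; rewrite IHl; lra.
Qed.

Lemma sumR_zero {A} (f : A -> R) l :
  (forall x, In x l -> f x = 0) -> sumR (map f l) = 0.
Proof. induction l; simpl; intros H; [lra|]. rewrite H, IHl; auto; lra. Qed.

Definition ssum (f : nat -> R) (N : nat) : R := sumR (map f (seq 0 N)).

Lemma ssum_Sr f N : ssum f (S N) = ssum f N + f N.
Proof. unfold ssum. rewrite seq_S, map_app, sumR_app. simpl. lra. Qed.

Lemma ssum_Sl f N : ssum f (S N) = f 0%nat + ssum (fun k => f (S k)) N.
Proof.
  unfold ssum. simpl. f_equal. rewrite <- seq_shift, map_map. reflexivity.
Qed.

Lemma ssum_rev f N : ssum f N = ssum (fun k => f (N - S k)%nat) N.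
Proof.
  induction N as [|N IH]; [reflexivity|].
  rewrite ssum_Sr, ssum_Sl. rewrite IH. simpl. replace (N - 0)%nat with N by lia.
  lra.
Qed.

Lemma ssum_le f g N : (forall k, (k < N)%nat -> f k <= g k) -> ssum f N <= ssum g N.
Proof. intros H. apply sumR_le. intros x Hx. apply in_seq in Hx. apply H; lia. Qed.

Lemma ssum_split f N M : ssum f (N + M) = ssum f N + sumR (map f (seq N M)).
Proof. unfold ssum. rewrite seq_app, map_app, sumR_app. reflexivity. Qed.

Definition gb (x : R) (k : nat) : R := / INR (fact k) * fallprod x k.

Lemma INR_fact_pos k : 0 < INR (fact k).
Proof. apply lt_0_INR, lt_O_fact. Qed.

Lemma gb_0 x : gb x 0 = 1.
Proof. unfold gb; simpl; lra. Qed.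

Lemma gb_S x k : gb x (S k) = gb x k * (x - INR k) / INR (S k).
Proof.
  unfold gb. simpl fallprod. rewrite fact_simpl, mult_INR.
  pose proof (INR_fact_pos k). assert (INR (S k) <> 0) by (apply not_0_INR; lia).
  field. split; lra.
Qed.

Lemma gb_shift x j : gb (x + 1) j * (x + 1 - INR j) = (x + 1) * gb x j.
Proof.
  induction j as [|j IH].
  - rewrite !gb_0; simpl; lra.
  - rewrite !gb_S. assert (INR (S j) <> 0) by (apply not_0_INR; lia).
    replace (gb (x + 1) j * (x + 1 - INR j) / INR (S j) * (x + 1 - INR (S j)))
      with ((gb (x + 1) j * (x + 1 - INR j)) * (x + 1 - INR (S j)) / INR (S j))
      by (field; auto).
    rewrite IH. rewrite S_INR. field. rewrite <- S_INR; auto.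
Qed.

Lemma gb_pascal x j : gb (x + 1) (S j) = gb x (S j) + gb x j.
Proof.
  rewrite !gb_S. assert (INR (S j) <> 0) by (apply not_0_INR; lia).
  replace (gb (x + 1) j * (x + 1 - INR j) / INR (S j))
    with ((gb (x + 1) j * (x + 1 - INR j)) / INR (S j)) by reflexivity.
  rewrite gb_shift. rewrite S_INR in *. field. auto.
Qed.

Lemma gb_nat_pos N j : (j <= N)%nat -> 0 < gb (INR N) j.
Proof.
  induction j as [|j IH]; intros H.
  - rewrite gb_0; lra.
  - rewrite gb_S. assert (0 < INR (S j)) by (apply lt_0_INR; lia).
    assert (INR j < INR N) by (apply lt_INR; lia).
    apply Rdiv_lt_0_compat; auto. apply Rmult_lt_0_compat; [apply IH; lia|lra].
Qed.

Lemma gb_nat_zero N k : gb (INR N) (S N + k) = 0.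
Proof.
  induction k as [|k IH].
  - rewrite Nat.add_0_r, gb_S. unfold Rminus. rewrite Rplus_opp_r. lra.
  - rewrite Nat.add_succ_r, gb_S, IH. lra.
Qed.

Lemma gb_nat_nonneg N j : 0 <= gb (INR N) j.
Proof.
  destruct (le_lt_dec j N) as [H|H].
  - left; now apply gb_nat_pos.
  - replace j with (S N + (j - S N))%nat by lia. rewrite gb_nat_zero; lra.
Qed.

Lemma gb_sum_le N K : ssum (gb (INR N)) K <= 2 ^ N.
Proof.
  revert K; induction N as [|N IH]; intros K.
  - destruct K as [|K]; [unfold ssum; simpl; lra|].
    rewrite ssum_Sl, gb_0.
    assert (ssum (fun k => gb (INR 0) (S k)) K = 0).
    { unfold ssum. apply sumR_zero. intros x _.
      replace (S x) with (S 0 + x)%nat by lia. apply gb_nat_zero. }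
    simpl pow. lra.
  - destruct K as [|K]; [unfold ssum; simpl; pose proof (pow_lt 2 N); lra|].
    rewrite ssum_Sl, gb_0.
    assert (E: ssum (fun k => gb (INR (S N)) (S k)) K
             = ssum (fun k => gb (INR N) (S k)) K + ssum (gb (INR N)) K).
    { unfold ssum. rewrite <- sumR_plus. apply sumR_ext. intros x _.
      rewrite S_INR. apply gb_pascal. }
    rewrite E. pose proof (IH (S K)). pose proof (IH K).
    rewrite ssum_Sl, gb_0 in H. simpl pow. lra.
Qed.

Lemma ln_le' x y : 0 < x -> x <= y -> ln x <= ln y.
Proof. intros Hx [H|H]; [left; apply ln_increasing; auto|subst; lra]. Qed.

Lemma ln_le_sub1 x : 0 < x -> ln x <= x - 1.
Proof.
  intros Hx. rewrite <- (ln_exp (x - 1)). apply ln_le'; auto.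
  pose proof (exp_ineq1_le (x - 1)). lra.
Qed.

Lemma ln_diff_le y : 0 < y -> ln (y + 1) - ln y <= / y.
Proof.
  intros Hy. replace (ln (y + 1) - ln y) with (ln ((y + 1) * / y)).
  - pose proof (ln_le_sub1 ((y + 1) * / y)).
    assert (0 < (y + 1) * / y) by (apply Rmult_lt_0_compat; [lra|apply Rinv_0_lt_compat; lra]).
    replace ((y + 1) * / y - 1) with (/ y) in H by (field; lra). auto.
  - rewrite ln_mult, ln_Rinv; try lra. apply Rinv_0_lt_compat; lra.
Qed.

Lemma key_fac a y : 0 <= a -> 0 < y -> 1 - a / y <= exp (- a * (ln (y + 1) - ln y)).
Proof.
  intros Ha Hy. pose proof (exp_ineq1_le (- a * (ln (y + 1) - ln y))).
  pose proof (ln_diff_le y Hy).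
  assert (a * (ln (y + 1) - ln y) <= a * / y) by (apply Rmult_le_compat_l; auto).
  unfold Rdiv. lra.
Qed.

Fixpoint Dp (a : R) (K : nat) : R :=
  match K with O => 1 | S K' => Dp a K' * (1 - a / INR K) end.

Lemma Dp_S a K : Dp a (S K) = Dp a K * (1 - a / INR (S K)).
Proof. reflexivity. Qed.

Lemma Dp_nonneg a K : a < 1 -> 0 <= Dp a K.
Proof.
  intros Ha. induction K as [|K IH]; [simpl; lra|]. rewrite Dp_S.
  apply Rmult_le_pos; auto.
  assert (1 <= INR (S K)) by (apply (le_INR 1); lia).
  assert (a / INR (S K) <= 1).
  { apply Rmult_le_reg_r with (INR (S K)); [lra|]. unfold Rdiv.
    rewrite Rmult_assoc, Rinv_l by lra. lra. }
  lra.
Qed.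

Lemma absgb a K : 0 < a < 1 -> Rabs (gb a (S K)) = a * Dp a K / INR (S K).
Proof.
  intros Ha. induction K as [|K IH].
  - rewrite gb_S, gb_0. simpl. rewrite Rabs_right; [field|]. lra.
  - rewrite gb_S. unfold Rdiv. rewrite !Rabs_mult, Rabs_inv. rewrite IH.
    assert (1 <= INR (S K)) by (apply (le_INR 1); lia).
    rewrite (Rabs_left1 (a - INR (S K))) by lra.
    rewrite (Rabs_right (INR (S (S K)))) by (apply Rle_ge, pos_INR).
    rewrite Dp_S. assert (INR (S (S K)) <> 0) by (apply not_0_INR; lia).
    field. split; lra.
Qed.

Lemma absgb_sum a K : 0 < a < 1 -> ssum (fun k => Rabs (gb a (S k))) K = 1 - Dp a K.
Proof.
  intros Ha. induction K as [|K IH]; [unfold ssum; simpl; lra|].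
  rewrite ssum_Sr, IH, absgb by auto. rewrite Dp_S.
  assert (INR (S K) <> 0) by (apply not_0_INR; lia). field. auto.
Qed.

Lemma absgb_sum_le a K : 0 < a < 1 -> ssum (fun k => Rabs (gb a (S k))) K <= 1.
Proof. intros Ha. rewrite absgb_sum by auto. pose proof (Dp_nonneg a K). lra. Qed.

Lemma Dp_exp a K : 0 <= a < 1 -> Dp a K <= exp (- a * ln (INR (S K))).
Proof.
  intros Ha. induction K as [|K IH].
  - change (Dp a 0) with 1. change (INR 1) with 1. rewrite ln_1, Rmult_0_r, exp_0. lra.
  - rewrite Dp_S. assert (0 < INR (S K)) by (apply lt_0_INR; lia).
    pose proof (key_fac a (INR (S K)) (proj1 Ha) H).
    replace (exp (- a * ln (INR (S (S K)))))
      with (exp (- a * ln (INR (S K))) * exp (- a * (ln (INR (S K) + 1) - ln (INR (S K))))).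
    2:{ rewrite <- exp_plus. f_equal. rewrite (S_INR (S K)). ring. }
    apply Rmult_le_compat; auto.
    + apply Dp_nonneg; lra.
    + assert (a / INR (S K) <= 1).
      { apply Rmult_le_reg_r with (INR (S K)); [lra|]. unfold Rdiv.
        rewrite Rmult_assoc, Rinv_l by lra.
        assert (1 <= INR (S K)) by (apply (le_INR 1); lia). nra. }
      lra.
Qed.

Fixpoint Qp (n : nat) (b : R) (j : nat) : R :=
  match j with O => 1 | S j' => Qp n b j' * (1 - b / (INR n - INR j')) end.

Lemma Qp_S n b j : Qp n b (S j) = Qp n b j * (1 - b / (INR n - INR j)).
Proof. reflexivity. Qed.

Lemma Qp_exp n b j : (j <= n)%nat -> 0 <= b <= 1 ->
  0 <= Qp n b j /\ Qp n b j <= exp (- b * (ln (INR n + 1) - ln (INR n - INR j + 1))).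
Proof.
  intros Hj Hb. induction j as [|j IH].
  - simpl. replace (INR n - 0 + 1) with (INR n + 1) by ring.
    rewrite Rminus_diag, Rmult_0_r, exp_0. lra.
  - destruct IH as [IH1 IH2]; [lia|]. rewrite Qp_S.
    assert (Hy: 1 <= INR n - INR j).
    { rewrite <- minus_INR by lia. apply (le_INR 1). lia. }
    assert (Hf: 0 <= 1 - b / (INR n - INR j)).
    { assert (b / (INR n - INR j) <= 1); [|lra].
      apply Rmult_le_reg_r with (INR n - INR j); [lra|]. unfold Rdiv.
      rewrite Rmult_assoc, Rinv_l by lra. nra. }
    split; [apply Rmult_le_pos; auto|].
    pose proof (key_fac b (INR n - INR j) (proj1 Hb) ltac:(lra)).
    replace (exp (- b * (ln (INR n + 1) - ln (INR n - INR (S j) + 1))))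
      with (exp (- b * (ln (INR n + 1) - ln (INR n - INR j + 1)))
            * exp (- b * (ln (INR n - INR j + 1) - ln (INR n - INR j)))).
    2:{ rewrite <- exp_plus. f_equal. rewrite S_INR.
        replace (INR n - (INR j + 1) + 1) with (INR n - INR j) by ring. ring. }
    apply Rmult_le_compat; auto.
Qed.

Lemma outer_bound n b c j : 0 <= b -> b <= c -> c < 2 -> (j + 2 <= n)%nat ->
  0 <= gb (INR n - c) j /\ gb (INR n - c) j <= gb (INR n) j * Qp n b j.
Proof.
  intros Hb Hbc Hc. induction j as [|j IH]; intros Hj.
  - rewrite !gb_0. simpl. lra.
  - destruct IH as [IH1 IH2]; [lia|].
    assert (H3: 3 <= INR n - INR j).
    { rewrite <- minus_INR by lia. replace 3 with (INR 3) by (simpl; ring); apply le_INR. lia. }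
    assert (HS: 0 < INR (S j)) by (apply lt_0_INR; lia).
    rewrite !gb_S. rewrite Qp_S.
    replace (gb (INR n) j * (INR n - INR j) / INR (S j) * (Qp n b j * (1 - b / (INR n - INR j))))
      with ((gb (INR n) j * Qp n b j) * (INR n - INR j - b) / INR (S j))
      by (field; lra).
    unfold Rdiv. split.
    + apply Rmult_le_pos; [|left; apply Rinv_0_lt_compat; auto].
      apply Rmult_le_pos; auto. lra.
    + apply Rmult_le_compat_r; [left; apply Rinv_0_lt_compat; auto|].
      apply Rmult_le_compat; auto; lra.
Qed.

Definition LL (n : nat) : R := ln (INR n + 1) - ln 3.

Lemma LL_pos n : (3 <= n)%nat -> 0 < LL n.
Proof.
  intros Hn. unfold LL. assert (3 <= INR n) by (replace 3 with (INR 3) by (simpl; ring); apply le_INR; auto).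
  assert (ln 3 < ln (INR n + 1)) by (apply ln_increasing; lra). lra.
Qed.

Lemma exp_le' x y : x <= y -> exp x <= exp y.
Proof. intros [H|H]; [left; apply exp_increasing; auto|subst; lra]. Qed.

Lemma b_exp_bound b L : 0 < b -> 0 < L -> b * exp (- (b * L)) <= / (exp 1 * L).
Proof.
  intros Hb HL. assert (Hy: 0 < b * L) by nra.
  assert (E: exp (b * L) = exp 1 * exp (b * L - 1)) by (rewrite <- exp_plus; f_equal; ring).
  pose proof (exp_ineq1_le (b * L - 1)).
  assert (He: 0 < exp 1) by apply exp_pos.
  assert (Hge: exp 1 * (b * L) <= exp (b * L)) by (rewrite E; apply Rmult_le_compat_l; lra).
  rewrite exp_Ropp.
  apply Rmult_le_reg_r with (exp (b * L) * (exp 1 * L)).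
  { apply Rmult_lt_0_compat; [apply exp_pos| nra]. }
  replace (b * / exp (b * L) * (exp (b * L) * (exp 1 * L))) with (b * (exp 1 * L))
    by (pose proof (exp_pos (b*L)); field; repeat split; lra).
  replace (/ (exp 1 * L) * (exp (b * L) * (exp 1 * L))) with (exp (b * L))
    by (field; lra).
  nra.
Qed.

Lemma half_bound n b c j k : (4 <= n)%nat -> (j + 2 <= n)%nat -> (1 <= k)%nat ->
  (n - j <= 2 * k)%nat -> 0 < b < 1 -> b <= c -> c < 2 ->
  gb (INR n - c) j * Rabs (gb b k) <= gb (INR n) j * (2 / (INR (n - j) * exp 1 * LL n)).
Proof.
  intros Hn Hj Hk Hm Hb Hbc Hc.
  destruct k as [|K]; [lia|].
  rewrite absgb by auto.
  destruct (outer_bound n b c j ltac:(lra) Hbc Hc Hj) as [O1 O2].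
  destruct (Qp_exp n b j ltac:(lia) ltac:(lra)) as [Q1 Q2].
  pose proof (Dp_exp b K ltac:(lra)) as D2. pose proof (Dp_nonneg b K ltac:(lra)) as D1.
  pose proof (gb_nat_nonneg n j) as G.
  assert (HL: 0 < LL n) by (apply LL_pos; lia).
  assert (HK: 0 < INR (S K)) by (apply lt_0_INR; lia).
  assert (Hmj: 2 <= INR (n - j)) by (replace 2 with (INR 2) by (simpl; ring); apply le_INR; lia).
  set (E := ln (INR n + 1) - ln (INR n - INR j + 1) + ln (INR (S K))).
  assert (T2: Qp n b j * Dp b K <= exp (- (b * E))).
  { replace (exp (- (b * E))) with
      (exp (- b * (ln (INR n + 1) - ln (INR n - INR j + 1))) * exp (- b * ln (INR (S K))))
      by (rewrite <- exp_plus; f_equal; unfold E; ring).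
    apply Rmult_le_compat; auto. }
  assert (HE: LL n <= E).
  { unfold E, LL. rewrite <- minus_INR by lia.
    assert (ln (INR (n - j) + 1) <= ln 3 + ln (INR (S K))); [|lra].
    rewrite <- ln_mult by lra. apply ln_le'. 
    - pose proof (pos_INR (n - j)); lra.
    - replace 3 with (INR 3) by (simpl; ring). rewrite <- mult_INR, <- S_INR.
      apply le_INR. lia. }
  assert (T3: b * exp (- (b * E)) <= / (exp 1 * LL n)).
  { eapply Rle_trans; [|apply (b_exp_bound b (LL n)); lra].
    apply Rmult_le_compat_l; [lra|]. apply exp_le'. nra. }
  assert (T4: / INR (S K) <= 2 / INR (n - j)).
  { apply Rmult_le_reg_r with (INR (S K) * INR (n - j)); [nra|].
    replace (/ INR (S K) * (INR (S K) * INR (n - j))) with (INR (n - j)) by (field; lra).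
    replace (2 / INR (n - j) * (INR (S K) * INR (n - j))) with (2 * INR (S K)) by (field; lra).
    replace 2 with (INR 2) by (simpl; ring).
    rewrite <- mult_INR. apply le_INR. lia. }
  assert (He1: 0 < exp 1) by apply exp_pos.
  apply Rle_trans with (gb (INR n) j * Qp n b j * (b * Dp b K / INR (S K))).
  { apply Rmult_le_compat_r; [|auto].
    unfold Rdiv. apply Rmult_le_pos; [nra|left; apply Rinv_0_lt_compat; auto]. }
  replace (gb (INR n) j * Qp n b j * (b * Dp b K / INR (S K)))
    with (gb (INR n) j * ((b * (Qp n b j * Dp b K)) * / INR (S K))) by (field; lra).
  apply Rmult_le_compat_l; auto.
  replace (2 / (INR (n - j) * exp 1 * LL n)) with (/ (exp 1 * LL n) * (2 / INR (n - j)))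
    by (field; repeat split; lra).
  apply Rmult_le_compat.
  - apply Rmult_le_pos; [lra| apply Rmult_le_pos; auto].
  - left; apply Rinv_0_lt_compat; auto.
  - eapply Rle_trans; [|exact T3]. apply Rmult_le_compat_l; [lra|auto].
  - auto.
Qed.

Lemma term_bound n a2 a3 j i2 i3 : (4 <= n)%nat -> (1 <= i2)%nat -> (1 <= i3)%nat ->
  (j + i2 + i3 = n)%nat -> 0 < a2 < 1 -> 0 < a3 < 1 ->
  Rabs (gb (INR n - a2 - a3) j * gb a2 i2 * gb a3 i3)
  <= gb (INR n) j * (2 / (INR (n - j) * exp 1 * LL n)) * (Rabs (gb a2 i2) + Rabs (gb a3 i3)).
Proof.
  intros Hn H2 H3 Hs Ha2 Ha3.
  replace (INR n - a2 - a3) with (INR n - (a2 + a3)) by ring.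
  destruct (outer_bound n 0 (a2 + a3) j ltac:(lra) ltac:(lra) ltac:(lra) ltac:(lia)) as [O1 _].
  rewrite !Rabs_mult, (Rabs_right (gb _ j)) by lra.
  assert (K0: 0 <= gb (INR n) j * (2 / (INR (n - j) * exp 1 * LL n))).
  { apply Rmult_le_pos; [apply gb_nat_nonneg|]. unfold Rdiv. apply Rmult_le_pos; [lra|].
    left; apply Rinv_0_lt_compat. apply Rmult_lt_0_compat; [apply Rmult_lt_0_compat|].
    - apply lt_0_INR; lia.
    - apply exp_pos.
    - apply LL_pos; lia. }
  pose proof (Rabs_pos (gb a2 i2)). pose proof (Rabs_pos (gb a3 i3)).
  destruct (le_lt_dec i2 i3).
  - pose proof (half_bound n a3 (a2 + a3) j i3 Hn ltac:(lia) H3 ltac:(lia) Ha3 ltac:(lra) ltac:(lra)).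
    replace (gb (INR n - (a2 + a3)) j * Rabs (gb a2 i2) * Rabs (gb a3 i3))
      with (Rabs (gb a2 i2) * (gb (INR n - (a2 + a3)) j * Rabs (gb a3 i3))) by ring.
    apply Rle_trans with (Rabs (gb a2 i2) * (gb (INR n) j * (2 / (INR (n - j) * exp 1 * LL n)))).
    + apply Rmult_le_compat_l; auto.
    + nra.
  - pose proof (half_bound n a2 (a2 + a3) j i2 Hn ltac:(lia) H2 ltac:(lia) Ha2 ltac:(lra) ltac:(lra)).
    replace (gb (INR n - (a2 + a3)) j * Rabs (gb a2 i2) * Rabs (gb a3 i3))
      with (Rabs (gb a3 i3) * (gb (INR n - (a2 + a3)) j * Rabs (gb a2 i2))) by ring.
    apply Rle_trans with (Rabs (gb a3 i3) * (gb (INR n) j * (2 / (INR (n - j) * exp 1 * LL n)))).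
    + apply Rmult_le_compat_l; auto.
    + nra.
Qed.

Lemma exp_nat k y : exp (INR k * y) = exp y ^ k.
Proof.
  induction k as [|k IH]; [simpl; rewrite Rmult_0_l, exp_0; reflexivity|].
  rewrite S_INR, Rmult_plus_distr_r, Rmult_1_l, exp_plus, IH. simpl. ring.
Qed.

Lemma exp4 : 35 <= exp 4.
Proof.
  replace 4 with (INR 16 * (1/4)) by (simpl; field).
  rewrite exp_nat.
  apply Rle_trans with ((5/4)^16); [simpl; lra|].
  apply pow_incr. pose proof (exp_ineq1_le (1/4)). lra.
Qed.

Lemma ln_key x : 4 <= x -> 4 * (ln x - 1) <= 5 * (ln (x + 1) - ln 3).
Proof.
  intros Hx.
  assert (P1: 243 * x^4 <= exp 4 * (x+1)^5).
  { assert (0 <= x^4) by (apply pow_le; lra).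
    assert ((x+1)^5 - x^4*(x+5) = 10*x^3+10*x^2+5*x+1) by ring.
    assert (0 <= 10*x^3+10*x^2+5*x+1) by (assert (0<=x^3) by (apply pow_le; lra); nra).
    assert (0 <= (x+1)^5) by (apply pow_le; lra).
    pose proof exp4. nra. }
  assert (H1: 0 < x^4) by (apply pow_lt; lra).
  assert (H2: 0 < (x+1)^5) by (apply pow_lt; lra).
  assert (P2: ln (243 * x^4) <= ln (exp 4 * (x+1)^5)) by (apply ln_le'; [nra|auto]).
  rewrite !ln_mult in P2 by (try apply exp_pos; lra).
  rewrite ln_exp, !ln_pow in P2 by lra.
  replace 243 with (3^5) in P2 by ring. rewrite ln_pow in P2 by lra.
  simpl INR in P2. lra.
Qed.

Lemma div_le_div a b c d : 0 < b -> 0 < d -> a * d <= c * b -> a / b <= c / d.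
Proof.
  intros Hb Hd H. apply Rmult_le_reg_r with (b * d); [nra|].
  replace (a / b * (b * d)) with (a * d) by (field; lra).
  replace (c / d * (b * d)) with (c * b) by (field; lra). auto.
Qed.

Lemma final_num (x L e P : R) : 4 <= x -> 0 < L -> 0 < e -> 0 < P -> 0 < ln x - 1 ->
  4 * (ln x - 1) <= 5 * L ->
  4 / (e * L) / (x + 1) * P + 8 / (e * L) / ((x + 1) * (x + 2)) * (2 * P)
  <= 5 * P / (e * x * (ln x - 1)) * (1 + 15 / (x - 3)).
Proof.
  intros Hx HL He HP Hu HuL. set (u := ln x - 1) in *.
  replace (4 / (e * L) / (x + 1) * P + 8 / (e * L) / ((x + 1) * (x + 2)) * (2 * P))
    with ((4 * u * P * (x + 6)) / (e * L * u * (x + 1) * (x + 2))) by (field; repeat split; lra).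
  replace (5 * P / (e * x * u) * (1 + 15 / (x - 3)))
    with ((5 * L * P * (x + 12)) / (e * x * u * L * (x - 3))) by (field; repeat split; lra).
  apply div_le_div.
  - repeat apply Rmult_lt_0_compat; lra.
  - repeat apply Rmult_lt_0_compat; lra.
  - assert (A: (x + 6) * (e * x * u * L * (x - 3)) <= (x + 12) * (e * L * u * (x + 1) * (x + 2))).
    { assert (0 < e * L * u) by (repeat apply Rmult_lt_0_compat; lra).
      replace ((x + 6) * (e * x * u * L * (x - 3))) with ((e * L * u) * ((x + 6) * x * (x - 3))) by ring.
      replace ((x + 12) * (e * L * u * (x + 1) * (x + 2))) with ((e * L * u) * ((x + 12) * (x + 1) * (x + 2))) by ring.
      apply Rmult_le_compat_l; [lra|]. nra. }
    assert (B: 0 <= (x + 6) * (e * x * u * L * (x - 3)) * P).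
    { apply Rmult_le_pos; [|lra]. apply Rmult_le_pos; [lra|].
      repeat apply Rmult_le_pos; lra. }
    replace (4 * u * P * (x + 6) * (e * x * u * L * (x - 3)))
      with ((4 * u) * ((x + 6) * (e * x * u * L * (x - 3)) * P)) by ring.
    replace (5 * L * P * (x + 12) * (e * L * u * (x + 1) * (x + 2)))
      with ((5 * L) * ((x + 12) * (e * L * u * (x + 1) * (x + 2)) * P)) by ring.
    apply Rmult_le_compat; try lra.
    apply Rmult_le_compat_r; lra.
Qed.

Definition Kf n a := if (a + 2 <=? n)%nat then gb (INR n) a * (2 / (INR (n - a) * exp 1 * LL n)) else 0.

Lemma Kpos n a : (4 <= n)%nat -> (a + 2 <= n)%nat -> 0 < 2 / (INR (n - a) * exp 1 * LL n).
Proof.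
  intros Hn Ha. apply Rdiv_lt_0_compat; [lra|].
  apply Rmult_lt_0_compat; [apply Rmult_lt_0_compat|].
  - apply lt_0_INR; lia.
  - apply exp_pos.
  - apply LL_pos; lia.
Qed.

Lemma Kf_nonneg n a : (4 <= n)%nat -> 0 <= Kf n a.
Proof.
  intros Hn. unfold Kf. destruct (a + 2 <=? n)%nat eqn:E; [|lra].
  apply Nat.leb_le in E. apply Rmult_le_pos; [apply gb_nat_nonneg|left; apply Kpos; auto].
Qed.

Lemma g1_sum n a2 a : 0 < a2 < 1 ->
  ssum (fun b => if (1 <=? b)%nat && (b <? n - a)%nat then Rabs (gb a2 b) else 0) (S n) <= 1.
Proof.
  intros Ha. rewrite ssum_Sl. simpl (1 <=? 0)%nat. rewrite andb_false_l, Rplus_0_l.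
  eapply Rle_trans; [|apply (absgb_sum_le a2 n Ha)].
  apply ssum_le. intros k _. simpl (1 <=? S k)%nat. rewrite andb_true_l.
  destruct (S k <? n - a)%nat; [lra|apply Rabs_pos].
Qed.

Lemma g2_sum n a3 a : 0 < a3 < 1 -> (a <= n)%nat ->
  ssum (fun b => if (1 <=? b)%nat && (b <? n - a)%nat then Rabs (gb a3 (n - a - b)) else 0) (S n) <= 1.
Proof.
  intros Ha Han. set (m := (n - a)%nat).
  set (g := fun b => if (1 <=? b)%nat && (b <? m)%nat then Rabs (gb a3 (m - b)) else 0).
  change (ssum g (S n) <= 1).
  replace (S n) with (m + (S n - m))%nat by (unfold m; lia).
  rewrite ssum_split.
  rewrite (sumR_zero g).
  2:{ intros x Hx. apply in_seq in Hx. unfold g.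
      replace (x <? m)%nat with false by (symmetry; apply Nat.ltb_ge; lia).
      rewrite andb_false_r. reflexivity. }
  rewrite Rplus_0_r, ssum_rev.
  eapply Rle_trans; [|apply (absgb_sum_le a3 m Ha)].
  apply ssum_le. intros k Hk. unfold g.
  destruct ((1 <=? m - S k)%nat && (m - S k <? m)%nat); [|apply Rabs_pos].
  replace (m - (m - S k))%nat with (S k) by lia. lra.
Qed.

Definition TT n a2 a3 (i : idx) : R :=
  if (1 <=? i2 i)%nat && (1 <=? i3 i)%nat
  then Rabs (gb (INR n - a2 - a3) (i1 i) * gb a2 (i2 i) * gb a3 (i3 i)) else 0.

Lemma inner n a2 a3 a : (4 <= n)%nat -> 0 < a2 < 1 -> 0 < a3 < 1 -> (a <= n)%nat ->
  ssum (fun b => sumR (map (TT n a2 a3)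
        (if (a + b <=? n)%nat then [((a, b), (n - a - b)%nat)] else []))) (S n) <= 2 * Kf n a.
Proof.
  intros Hn Ha2 Ha3 Han.
  destruct (a + 2 <=? n)%nat eqn:Ea.
  - apply Nat.leb_le in Ea.
    set (g1 := fun b => if (1 <=? b)%nat && (b <? n - a)%nat then Rabs (gb a2 b) else 0).
    set (g2 := fun b => if (1 <=? b)%nat && (b <? n - a)%nat then Rabs (gb a3 (n - a - b)) else 0).
    pose proof (Kf_nonneg n a Hn) as HK.
    apply Rle_trans with (ssum (fun b => Kf n a * (g1 b + g2 b)) (S n)).
    + apply ssum_le. intros b Hb.
      assert (Hg: 0 <= g1 b + g2 b).
      { unfold g1, g2. destruct ((1 <=? b)%nat && (b <? n - a)%nat);
        [pose proof (Rabs_pos (gb a2 b)); pose proof (Rabs_pos (gb a3 (n - a - b))); lra|lra]. }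
      destruct (a + b <=? n)%nat eqn:E1; cbn [map sumR fold_right]; [|nra].
      apply Nat.leb_le in E1. unfold TT, i1, i2, i3; cbn [fst snd].
      destruct (1 <=? b)%nat eqn:E2; [|simpl; nra].
      destruct (1 <=? n - a - b)%nat eqn:E3; [|simpl; nra].
      apply Nat.leb_le in E2, E3. simpl andb.
      unfold g1, g2. replace (b <? n - a)%nat with true by (symmetry; apply Nat.ltb_lt; lia).
      replace (1 <=? b)%nat with true by (symmetry; apply Nat.leb_le; lia).
      simpl andb.
      pose proof (term_bound n a2 a3 a b (n - a - b) Hn E2 E3 ltac:(lia) Ha2 Ha3).
      unfold Kf. replace (a + 2 <=? n)%nat with true by (symmetry; apply Nat.leb_le; lia).
      lra.
    + unfold ssum. rewrite sumR_scal, sumR_plus. fold (ssum g1 (S n)) (ssum g2 (S n)).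
      pose proof (g1_sum n a2 a Ha2). pose proof (g2_sum n a3 a Ha3 Han).
      fold g1 in H. fold g2 in H0. nra.
  - apply Nat.leb_gt in Ea.
    unfold Kf. replace (a + 2 <=? n)%nat with false by (symmetry; apply Nat.leb_gt; lia).
    apply Rle_trans with (ssum (fun _ => 0) (S n)).
    + apply ssum_le. intros b Hb.
      destruct (a + b <=? n)%nat eqn:E1; cbn [map sumR fold_right]; [|lra].
      apply Nat.leb_le in E1. unfold TT, i1, i2, i3; cbn [fst snd].
      destruct (1 <=? b)%nat eqn:E2; [|simpl; lra].
      destruct (1 <=? n - a - b)%nat eqn:E3; [|simpl; lra].
      apply Nat.leb_le in E2, E3. lia.
    + unfold ssum. rewrite sumR_zero; auto. lra.
Qed.

Lemma outer_pt n a : (4 <= n)%nat -> (a <= n)%nat ->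
  2 * Kf n a <= 4 / (exp 1 * LL n) / (INR n + 1) * gb (INR (S n)) a
             + 8 / (exp 1 * LL n) / ((INR n + 1) * (INR n + 2)) * gb (INR (S (S n))) a.
Proof.
  intros Hn Han.
  assert (HL: 0 < LL n) by (apply LL_pos; lia).
  assert (He: 0 < exp 1) by apply exp_pos.
  assert (Hx: 4 <= INR n) by (replace 4 with (INR 4) by (simpl; ring); apply le_INR; auto).
  pose proof (gb_nat_nonneg (S n) a). pose proof (gb_nat_nonneg (S (S n)) a).
  assert (c1: 0 <= 4 / (exp 1 * LL n) / (INR n + 1)).
  { unfold Rdiv. repeat apply Rmult_le_pos; try lra; left; apply Rinv_0_lt_compat; nra. }
  assert (c2: 0 <= 8 / (exp 1 * LL n) / ((INR n + 1) * (INR n + 2))).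
  { unfold Rdiv. repeat apply Rmult_le_pos; try lra; left; apply Rinv_0_lt_compat; nra. }
  unfold Kf. destruct (a + 2 <=? n)%nat eqn:Ea; [|nra].
  apply Nat.leb_le in Ea.
  rewrite minus_INR by lia.
  set (x := INR n) in *. set (m := x - INR a).
  assert (Hm: 2 <= m).
  { unfold m, x. rewrite <- minus_INR by lia. replace 2 with (INR 2) by (simpl; ring). apply le_INR; lia. }
  set (G0 := gb x a). set (G1 := gb (INR (S n)) a). set (G2 := gb (INR (S (S n))) a).
  assert (R1: G1 * (m + 1) = (x + 1) * G0).
  { unfold G1, G0, m. rewrite S_INR. fold x. rewrite <- gb_shift. f_equal. ring. }
  assert (R2: G2 * (m + 2) = (x + 2) * G1).
  { unfold G2, G1, m. rewrite (S_INR (S n)).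
    replace (x + 2) with (INR (S n) + 1) by (rewrite S_INR; fold x; ring).
    rewrite <- gb_shift. f_equal. rewrite S_INR; fold x; ring. }
  assert (E1: G1 = (x + 1) * G0 / (m + 1)) by (rewrite <- R1; field; lra).
  assert (E2: G2 = (x + 2) * G1 / (m + 2)) by (rewrite <- R2; field; lra).
  fold G1 G2. rewrite E2, E1.
  pose proof (gb_nat_nonneg n a) as HG0. fold x G0 in HG0.
  assert (D: 4 / (exp 1 * LL n) / (x + 1) * ((x + 1) * G0 / (m + 1)) +
      8 / (exp 1 * LL n) / ((x + 1) * (x + 2)) * ((x + 2) * ((x + 1) * G0 / (m + 1)) / (m + 2))
      - 2 * (G0 * (2 / (m * exp 1 * LL n)))
      = 4 / (exp 1 * LL n) * G0 * (m - 2) / (m * (m + 1) * (m + 2))) by (field; repeat split; lra).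
  assert (0 <= 4 / (exp 1 * LL n) * G0 * (m - 2) / (m * (m + 1) * (m + 2))).
  { unfold Rdiv. apply Rmult_le_pos; [|left; apply Rinv_0_lt_compat; repeat apply Rmult_lt_0_compat; lra].
    apply Rmult_le_pos; [|lra]. apply Rmult_le_pos; [|lra].
    apply Rmult_le_pos; [lra|left; apply Rinv_0_lt_compat; nra]. }
  lra.
Qed.

Lemma outer_sum n : (4 <= n)%nat ->
  ssum (fun a => 2 * Kf n a) (S n) <=
  4 / (exp 1 * LL n) / (INR n + 1) * 2 ^ (S n)
  + 8 / (exp 1 * LL n) / ((INR n + 1) * (INR n + 2)) * 2 ^ (S (S n)).
Proof.
  intros Hn.
  assert (HL: 0 < LL n) by (apply LL_pos; lia).
  assert (He: 0 < exp 1) by apply exp_pos.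
  assert (Hx: 0 <= INR n) by apply pos_INR.
  eapply Rle_trans.
  - apply ssum_le. intros a Ha. apply outer_pt; [auto|lia].
  - unfold ssum. rewrite sumR_plus, !sumR_scal. fold (ssum (gb (INR (S n))) (S n)).
    fold (ssum (gb (INR (S (S n)))) (S n)).
    pose proof (gb_sum_le (S n) (S n)). pose proof (gb_sum_le (S (S n)) (S n)).
    apply Rplus_le_compat; apply Rmult_le_compat_l; auto;
    unfold Rdiv; repeat apply Rmult_le_pos; try lra; left; apply Rinv_0_lt_compat; nra.
Qed.

Theorem lemma26 (n : nat) (a2 a3 : R) :
  (4 <= n)%nat -> 0 < a2 < 1 -> 0 < a3 < 1 ->
  let a1 := 1 - a2 - a3 in
  let lam1 := (INR n - 1 + a1) / INR n in
  let lam2 := a2 / INR n in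
  let lam3 := a3 / INR n in
  sumR (map (fun i => Rabs (lagr n i lam1 lam2 lam3))
            (filter (fun i => (1 <=? i2 i)%nat && (1 <=? i3 i)%nat) (Iset n)))
  <= 5 * 2 ^ (n + 1) / (exp 1 * INR n * (ln (INR n) - 1))
     * (1 + 15 / (INR n - 3)).
Proof.
  intros Hn Ha2 Ha3 a1 lam1 lam2 lam3.
  assert (Hx: 4 <= INR n) by (replace 4 with (INR 4) by (simpl; ring); apply le_INR; auto).
  assert (EQ: forall i, Rabs (lagr n i lam1 lam2 lam3) =
     Rabs (gb (INR n - a2 - a3) (i1 i) * gb a2 (i2 i) * gb a3 (i3 i))).
  { intros i. unfold lagr, lfactor. fold (gb (INR n * lam1) (i1 i)).
    fold (gb (INR n * lam2) (i2 i)). fold (gb (INR n * lam3) (i3 i)).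
    replace (INR n * lam1) with (INR n - a2 - a3) by (unfold lam1, a1; field; lra).
    replace (INR n * lam2) with a2 by (unfold lam2; field; lra).
    replace (INR n * lam3) with a3 by (unfold lam3; field; lra). reflexivity. }
  rewrite (map_ext _ _ EQ).
  rewrite sumR_filter. fold (TT n a2 a3). 
  unfold Iset. rewrite sumR_flat_map.
  eapply Rle_trans.
  { apply sumR_le with (g := fun a => 2 * Kf n a). intros a Ha. apply in_seq in Ha.
    rewrite sumR_flat_map. apply inner; auto; lia. }
  fold (ssum (fun a => 2 * Kf n a) (S n)).
  eapply Rle_trans; [apply outer_sum; auto|].
  assert (HL: 0 < LL n) by (apply LL_pos; lia).
  assert (Hu: 0 < ln (INR n) - 1).
  { assert (ln (exp 1) < ln (INR n)); [|rewrite ln_exp in H; lra].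
    apply ln_increasing; [apply exp_pos|]. pose proof exp_le_3. lra. }
  pose proof (ln_key (INR n) Hx) as K.
  replace (2 ^ S (S n)) with (2 * 2 ^ (n + 1)) by (rewrite Nat.add_1_r; simpl; ring).
  replace (2 ^ S n) with (2 ^ (n + 1)) by (rewrite Nat.add_1_r; reflexivity).
  apply final_num; auto.
  - apply exp_pos.
  - apply pow_lt; lra.
Qed.
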